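(* There is an absolute constant $C > 0$ such that for every integer $L \geq 2$, every $m \geq 1$, every $\lambda \in [m]^{L+1}$ and all integers $0 \leq i < j \leq L$, every state on the path produced by running $\mathbf{Swap}(i, j)$ from $\lambda$ differs from $\lambda$ in at most $C \log L$ coordinates.
   Context: States are vectors $\lambda = (\lambda_0, \ldots, \lambda_L) \in [m]^{L+1}$, $[m] = \{1,\ldots,m\}$; coordinate $\ell$ is called level $\ell$. The recursive procedure $\mathbf{Swap}(i, j)$ for integers $0 \leq i \leq j \leq L$ acts on the current state as follows: if $j - i \leq 1$, it performs the single elementary operation ''exchange the entries at levels $i$ and $j$''; otherwise, with $h = \lfloor (i + j)/2 \rfloor$, it performs $\mathbf{Swap}(i, h)$, then $\mathbf{Swap}(h, j)$, then $\mathbf{Swap}(i, h)$. The path produced from a starting state is the sequence consisting of the starting state followed by the state obtained after each elementary operation. Two states differ in a coordinate $\ell$ if their level-$\ell$ entries are unequal. *)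

(* Defs.v *)
From mathcomp Require Import all_boot.
From Stdlib Require Import Reals.
Set Implicit Arguments. Unset Strict Implicit. Unset Printing Implicit Defensive.

(* A state lambda = (lambda_0, ..., lambda_L) is a sequence of naturals;
   level l is the entry at index l. *)
Definition state := seq nat.

Definition exch (s : state) (p : nat * nat) : state :=
  let: (i, j) := p in
  set_nth 0 (set_nth 0 s i (nth 0 s j)) j (nth 0 s i).

(* The sequence of elementary operations (pairs of levels) performed by
   Swap(i, j).  [fuel] only serves structural recursion; fuel = j - i is
   always sufficient since both halves have strictly smaller width. *)
Fixpoint swap_ops_fuel (fuel i j : nat) : seq (nat * nat) :=
  if j - i <= 1 then [:: (i, j)]
  else match fuel with
       | 0 => [::]
       | fuel'.+1 =>
           let h := (i + j) %/ 2 in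
           swap_ops_fuel fuel' i h ++ swap_ops_fuel fuel' h j
             ++ swap_ops_fuel fuel' i h
       end.

Definition swap_ops (i j : nat) : seq (nat * nat) := swap_ops_fuel (j - i) i j.

Definition swap_path (i j : nat) (lam : state) : seq state :=
  lam :: scanl exch lam (swap_ops i j).

Definition ndiff (L : nat) (s t : state) : nat :=
  count (fun l => nth 0 s l != nth 0 t l) (iota 0 L.+1).

Definition is_state (L m : nat) (lam : state) : bool :=
  (size lam == L.+1) && all (fun x => (1 <= x) && (x <= m)) lam.

(* Main.v *)
Require Import Defs.
From mathcomp Require Import all_boot.
From mathcomp Require Import zify.

Lemma nth_exch s i j l : nth 0 (exch s (i, j)) l =
  if l == j then nth 0 s i else if l == i then nth 0 s j else nth 0 s l.
Proof. by rewrite /exch nth_set_nth /= nth_set_nth. Qed.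

Lemma exch_ext s s' p : nth 0 s =1 nth 0 s' -> nth 0 (exch s p) =1 nth 0 (exch s' p).
Proof. by case: p => i j E l; rewrite !nth_exch !E. Qed.

Lemma fold_ext ops : forall s s', nth 0 s =1 nth 0 s' ->
  nth 0 (foldl exch s ops) =1 nth 0 (foldl exch s' ops).
Proof. elim: ops => [|p ops IH] s s' E //=; apply: IH; exact: exch_ext. Qed.

Lemma final fuel : forall i j t, i <= j -> j - i <= fuel ->
  nth 0 (foldl exch t (swap_ops_fuel fuel i j)) =1 nth 0 (exch t (i, j)).
Proof.
elim: fuel => [|n IH] i j t Hij Hf; simpl swap_ops_fuel.
  by rewrite ifT //; lia.
case: ifP => H //.
set h := (i + j) %/ 2.
have H1 : i < h by rewrite /h; lia.
have H2 : h < j by rewrite /h; lia.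
have IH1 := fun t => IH i h t (ltnW H1) ltac:(rewrite /h; lia).
have IH2 := fun t => IH h j t (ltnW H2) ltac:(rewrite /h; lia).
move=> l; rewrite !foldl_cat IH1 !nth_exch !IH2 !nth_exch !IH1 !nth_exch.
have hi : (h == i) = false by apply/eqP; lia.
have ih : (i == h) = false by apply/eqP; lia.
have ij : (i == j) = false by apply/eqP; lia.
have ji : (j == i) = false by apply/eqP; lia.
have hj : (h == j) = false by apply/eqP; lia.
have jh : (j == h) = false by apply/eqP; lia.
rewrite hi ih ij ji hj jh !eqxx.
case: (eqVneq l i) => [->|li]; first by rewrite ih ij.
case: (eqVneq l j) => [->|lj]; first by rewrite jh.
by case: (eqVneq l h) => [->|].
Qed.


Lemma ndiff_support L s t S : (forall l, l \notin S -> nth 0 s l = nth 0 t l) ->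
  ndiff L s t <= size S.
Proof.
move=> H; rewrite /ndiff.
apply: leq_trans (sub_count (a2 := mem S) _ _) _.
  move=> l /=; apply: contraR => /H ->; by rewrite eqxx.
rewrite -size_filter; apply: uniq_leq_size; first by rewrite filter_uniq ?iota_uniq.
by move=> x; rewrite mem_filter => /andP[].
Qed.

Lemma ndiff_tri L s t u : ndiff L s u <= ndiff L s t + ndiff L t u.
Proof.
rewrite /ndiff -count_predUI.
apply: leq_trans (leq_addr _ _).
apply: sub_count => l /=; rewrite -negb_and; apply: contra => /andP[/eqP -> /eqP ->].
by [].
Qed.

Lemma ndiff_ext L s s' t : nth 0 s =1 nth 0 s' -> ndiff L s t = ndiff L s' t.
Proof. by move=> E; rewrite /ndiff; apply: eq_count => l; rewrite E. Qed.

Lemma bound L fuel : forall k i j t, i <= j -> j - i <= fuel -> j - i <= 2 ^ k ->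
  forall s, s \in scanl exch t (swap_ops_fuel fuel i j) -> ndiff L s t <= 3 * k + 2.
Proof.
have base : forall t i j, ndiff L (exch t (i, j)) t <= 2.
  move=> t i j; apply: (@ndiff_support L _ _ [:: i; j]) => l.
  rewrite !inE negb_or => /andP[li lj]; by rewrite nth_exch (negbTE li) (negbTE lj).
elim: fuel => [|n IH] k i j t Hij Hf Hk s; simpl swap_ops_fuel.
  rewrite ifT; last lia.
  rewrite /= inE => /eqP ->; apply: leq_trans (base _ _ _) _; lia.
case: ifP => H.
  rewrite /= inE => /eqP ->; apply: leq_trans (base _ _ _) _; lia.
case: k Hk => [|k] Hk; first by move: Hk H; rewrite expn0; lia.
set h := (i + j) %/ 2.
have HP : 0 < 2 ^ k by rewrite expn_gt0.
rewrite expnS in Hk.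
have IH1 := fun t => IH k i h t ltac:(rewrite /h; lia) ltac:(rewrite /h; lia) ltac:(rewrite /h; lia).
have IH2 := fun t => IH k h j t ltac:(rewrite /h; lia) ltac:(rewrite /h; lia) ltac:(rewrite /h; lia).
have F1 := @final n i h t ltac:(rewrite /h; lia) ltac:(rewrite /h; lia).
set u1 := foldl exch t (swap_ops_fuel n i h).
have D1 : ndiff L u1 t <= 2 by rewrite (@ndiff_ext L _ _ t F1); apply: base.
have F2 := @final n h j u1 ltac:(rewrite /h; lia) ltac:(rewrite /h; lia).
set u2 := foldl exch u1 (swap_ops_fuel n h j).
have D2 : ndiff L u2 t <= 3.
  apply: (@ndiff_support L _ _ [:: i; h; j]) => l.
  rewrite !inE !negb_or => /andP[li /andP[lh lj]].
  by rewrite F2 nth_exch (negbTE lj) (negbTE lh) F1 nth_exch (negbTE lh) (negbTE li).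
rewrite !scanl_cat !mem_cat => /orP[Hs|/orP[Hs|Hs]].
- have := IH1 t s Hs; lia.
- apply: leq_trans (@ndiff_tri L s u1 t) _.
  have := IH2 u1 s Hs; lia.
-
  apply: leq_trans (@ndiff_tri L s u2 t) _.
  have := IH1 u2 s Hs; lia.
Qed.

Lemma nat_bound L lam i j s : 2 <= L -> i < j -> j <= L ->
  s \in swap_path i j lam -> ndiff L s lam <= 8 * trunc_log 2 L.
Proof.
move=> HL Hij HjL.
have := trunc_log_bounds (p := 2) (n := L) isT ltac:(lia).
have := trunc_log_gt0 2 L; rewrite HL /= => Hk.
set k := trunc_log 2 L => /andP[_ Hlt].
rewrite inE => /orP[/eqP ->|Hs].
  apply: leq_trans (@ndiff_support L _ _ [::] _) _ => //.
apply: leq_trans (@bound L (j - i) k.+1 i j lam _ _ _ s Hs) _.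
- exact: ltnW.
- by [].
- lia.
- lia.
Qed.

From Stdlib Require Import Reals Lra Psatz.

Theorem lemma2 :
  exists C : R, (0 < C)%R /\
    forall (L m : nat) (lam : state) (i j : nat),
      2 <= L -> 1 <= m -> is_state L m lam -> i < j -> j <= L ->
      forall s, s \in swap_path i j lam ->
        (INR (ndiff L s lam) <= C * ln (INR L))%R.
Proof.
exists 16%R; split; first lra.
move=> L m lam i j HL _ _ Hij HjL s Hs.
have HN := @nat_bound L lam i j s ltac:(first [exact HL | apply/leP; exact HL]) ltac:(first [exact Hij | apply/ltP; exact Hij])
  ltac:(first [exact HjL | apply/leP; exact HjL]) Hs.
set k := trunc_log 2 L in HN.
have Hp : (expn 2 k <= L)%N by apply: trunc_logP => //; apply/ltP; lia.
have R1 : (INR (ndiff L s lam) <= 8 * INR k)%R.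
  rewrite -(INR_IZR_INZ 8) -mult_INR; apply: le_INR; exact/leP.
have R2 : (INR (expn 2 k) <= INR L)%R by apply: le_INR; exact/leP.
have I2 : INR 2 = 2%R by rewrite /INR; lra.
have E : INR (expn 2 k) = (2 ^ k)%R.
  rewrite -I2 -pow_INR; congr INR; elim: (k) => // k' IH; by rewrite expnS /= IH.
have R3 : (INR k * ln 2 <= ln (INR L))%R.
  rewrite -ln_pow; last lra.
  rewrite -E; case: (Rle_lt_or_eq_dec _ _ R2) => [Hl|->]; last lra.
  apply: Rlt_le; apply: ln_increasing => //; apply: lt_0_INR; apply/ltP; by rewrite expn_gt0.
have := ln_lt_2; have : (0 <= INR k)%R by apply: pos_INR.
nra.
Qed.
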